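(* Let $|\psi\rangle,|\phi\rangle\in\mathcal{H}'$ be pure states, with $p_b=|\langle b|\psi\rangle|^2$ and $q_b=|\langle b|\phi\rangle|^2$ for $b\in\{0,1\}$. There exists a deterministic (trace-preserving) Z$_2$-invariant operation $\mathcal{E}$ with $\mathcal{E}(|\psi\rangle\langle\psi|)=|\phi\rangle\langle\phi|$ if and only if $\mathcal{C}(|\psi\rangle)\ge\mathcal{C}(|\phi\rangle)$, where $\mathcal{C}(|\psi\rangle)=2\min\{p_0,p_1\}$ and $\mathcal{C}(|\phi\rangle)=2\min\{q_0,q_1\}$.
   Context: $\mathcal{H}'$ is a two-dimensional Hilbert space with orthonormal basis $|0\rangle,|1\rangle$; the parity operator is $\pi=|0\rangle\langle0|-|1\rangle\langle1|$, and Z$_2$ acts by $\{I,\pi\}$. A Z$_2$-invariant operation is a completely positive, trace-nonincreasing linear map $\mathcal{E}$ on operators on $\mathcal{H}'$ with $\mathcal{E}(\pi X\pi)=\pi\mathcal{E}(X)\pi$ for all $X$; it is deterministic if trace-preserving. *)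

(* Defs.v *)
(* Complex numbers: an arbitrary numClosedFieldType C
   (algebraically closed field with conjugation and partial order, e.g. the complex numbers). *)
From mathcomp Require Import all_boot all_order all_algebra.
Set Implicit Arguments. Unset Strict Implicit. Unset Printing Implicit Defensive.
Import Order.TTheory GRing.Theory Num.Theory.
Local Open Scope ring_scope.

Section QDefs.
Variable C : numClosedFieldType.

Definition dagger m n (A : 'M[C]_(m, n)) : 'M[C]_(n, m) := map_mx Num.conj A^T.

Definition psd m (A : 'M[C]_m) : Prop :=
  dagger A = A /\ forall v : 'cV[C]_m, 0 <= (dagger v *m A *m v) 0 0.

(* positive semidefiniteness of an element of M_n (x) M_2, written as an n x n array of 2x2 blocks *)
Definition block_psd n (X : 'I_n -> 'I_n -> 'M[C]_2) : Prop :=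
  (forall i j, X j i = dagger (X i j)) /\
  forall v : 'I_n -> 'cV[C]_2,
    0 <= \sum_(i < n) \sum_(j < n) (dagger (v i) *m X i j *m v j) 0 0.

Definition linear_map (E : 'M[C]_2 -> 'M[C]_2) : Prop :=
  forall (a : C) (X Y : 'M[C]_2), E (a *: X + Y) = a *: E X + E Y.

(* complete positivity: id_n (x) E is positive for every n *)
Definition completely_positive (E : 'M[C]_2 -> 'M[C]_2) : Prop :=
  forall n (X : 'I_n -> 'I_n -> 'M[C]_2), block_psd X -> block_psd (fun i j => E (X i j)).

Definition trace_nonincreasing (E : 'M[C]_2 -> 'M[C]_2) : Prop :=
  forall rho : 'M[C]_2, psd rho -> \tr (E rho) <= \tr rho.

Definition trace_preserving (E : 'M[C]_2 -> 'M[C]_2) : Prop :=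
  forall X : 'M[C]_2, \tr (E X) = \tr X.

Definition parity : 'M[C]_2 := \matrix_(i < 2, j < 2) (if i == j then (if i == 0 then 1 else -1) else 0).

Definition Z2_invariant (E : 'M[C]_2 -> 'M[C]_2) : Prop :=
  forall X : 'M[C]_2, E (parity *m X *m parity) = parity *m E X *m parity.

Definition Z2_operation (E : 'M[C]_2 -> 'M[C]_2) : Prop :=
  [/\ linear_map E, completely_positive E, trace_nonincreasing E & Z2_invariant E].

Definition deterministic_Z2_operation (E : 'M[C]_2 -> 'M[C]_2) : Prop :=
  Z2_operation E /\ trace_preserving E.

Definition unit_vector (psi : 'cV[C]_2) : Prop :=
  \sum_(b < 2) `|psi b 0| ^+ 2 = 1.

Definition proj (psi : 'cV[C]_2) : 'M[C]_2 := psi *m dagger psi.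

Definition pop (psi : 'cV[C]_2) (b : 'I_2) : C := `|psi b 0| ^+ 2.

Definition coh (psi : 'cV[C]_2) : C := 2 * Num.min (pop psi 0) (pop psi 1).

End QDefs.

(* Main.v *)
Require Import Defs.
From mathcomp Require Import all_boot all_order all_algebra ring.
Import Order.TTheory GRing.Theory Num.Theory.
Local Open Scope ring_scope.

Lemma daggerM {C : numClosedFieldType} m n p (A : 'M[C]_(m, n)) (B : 'M[C]_(n, p)) :
  dagger (A *m B) = dagger B *m dagger A.
Proof.
apply/matrixP => i j; rewrite /dagger !mxE rmorph_sum; apply: eq_bigr => k _.
by rewrite !mxE rmorphM mulrC.
Qed.

Lemma daggerK {C : numClosedFieldType} m n (A : 'M[C]_(m, n)) : dagger (dagger A) = A.
Proof. by apply/matrixP => i j; rewrite /dagger !mxE conjCK. Qed.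

Lemma daggerD {C : numClosedFieldType} m n (A B : 'M[C]_(m, n)) :
  dagger (A + B) = dagger A + dagger B.
Proof. by apply/matrixP => i j; rewrite /dagger !mxE rmorphD. Qed.

Lemma daggerZ {C : numClosedFieldType} m n (a : C) (A : 'M[C]_(m, n)) :
  dagger (a *: A) = a^* *: dagger A.
Proof. by apply/matrixP => i j; rewrite /dagger !mxE rmorphM. Qed.

Definition kraus {C : numClosedFieldType} (K1 K2 : 'M[C]_2) (X : 'M[C]_2) :=
  K1 *m X *m dagger K1 + K2 *m X *m dagger K2.

Lemma kraus_linear {C : numClosedFieldType} (K1 K2 : 'M[C]_2) : linear_map (kraus K1 K2).
Proof.
move=> a X Y; rewrite /kraus !mulmxDr !mulmxDl -!scalemxAr -!scalemxAl scalerDr.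
by rewrite !addrA; congr (_ + _); rewrite -!addrA; congr (_ + _); rewrite addrC.
Qed.

Lemma kraus_cp {C : numClosedFieldType} (K1 K2 : 'M[C]_2) : completely_positive (kraus K1 K2).
Proof.
move=> n X [Hh Hp]; split.
  move=> i j; rewrite Hh /kraus daggerD !daggerM !daggerK !mulmxA.
  by [].
move=> v; rewrite /kraus.
have -> : \sum_(i < n) \sum_(j < n) (dagger (v i) *m (K1 *m X i j *m dagger K1 + K2 *m X i j *m dagger K2) *m v j) 0 0
  = \sum_(i < n) \sum_(j < n) (dagger (dagger K1 *m v i) *m X i j *m (dagger K1 *m v j)) 0 0
  + \sum_(i < n) \sum_(j < n) (dagger (dagger K2 *m v i) *m X i j *m (dagger K2 *m v j)) 0 0.
  rewrite -big_split; apply: eq_bigr => i _; rewrite -big_split; apply: eq_bigr => j _.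
  by rewrite !daggerM !daggerK mulmxDr mulmxDl !mulmxA mxE.
by apply: addr_ge0; apply: Hp.
Qed.

Lemma kraus_tp {C : numClosedFieldType} (K1 K2 : 'M[C]_2) :
  dagger K1 *m K1 + dagger K2 *m K2 = 1%:M -> trace_preserving (kraus K1 K2).
Proof.
move=> H X; rewrite /kraus mxtraceD mxtrace_mulC mulmxA [\tr (K2 *m _ *m _)]mxtrace_mulC mulmxA.
by rewrite -mxtraceD -mulmxDl H mul1mx.
Qed.


Ltac m2 := apply/matrixP; case=> [[|[|//]]] ?; case=> [[|[|//]]] ?;
  rewrite ?mxE ?big_ord_recr ?big_ord0 /= ?mxE /=.

Lemma parity2 {C : numClosedFieldType} : parity C *m parity C = 1%:M.
Proof. by m2; ring. Qed.

Lemma dagger_parity {C : numClosedFieldType} : dagger (parity C) = parity C.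
Proof. by rewrite /dagger; m2; rewrite ?rmorphN ?rmorph1 ?rmorph0. Qed.

Lemma kraus_z2 {C : numClosedFieldType} (K1 K2 : 'M[C]_2) (e1 e2 : bool) :
  parity C *m K1 *m parity C = (-1) ^+ e1 *: K1 ->
  parity C *m K2 *m parity C = (-1) ^+ e2 *: K2 ->
  Z2_invariant (kraus K1 K2).
Proof.
move=> H1 H2 X.
have key : forall (K : 'M[C]_2) (e : bool), parity C *m K *m parity C = (-1) ^+ e *: K ->
  parity C *m (K *m X *m dagger K) *m parity C = K *m (parity C *m X *m parity C) *m dagger K.
  move=> K e H.
  have -> : parity C *m (K *m X *m dagger K) *m parity C =
     (parity C *m K *m parity C) *m (parity C *m X *m parity C) *m (parity C *m dagger K *m parity C).
    by rewrite !mulmxA -[_ *m parity C *m parity C]mulmxA parity2 mulmx1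
      -[_ *m parity C *m parity C]mulmxA parity2 mulmx1.
  have -> : parity C *m dagger K *m parity C = dagger (parity C *m K *m parity C).
    by rewrite !daggerM dagger_parity mulmxA.
  rewrite H daggerZ -!scalemxAl -scalemxAr scalerA.
  by case: e {H} => /=; rewrite ?expr1 ?expr0 ?rmorphN ?rmorph1 ?mulrNN ?mulr1 scale1r.
by rewrite /kraus mulmxDr mulmxDl (key _ _ H1) (key _ _ H2).
Qed.


Lemma sum2 {R : nmodType} (F : 'I_2 -> R) : \sum_(i < 2) F i = F 0 + F 1.
Proof. rewrite big_ord_recr big_ord1 /=; congr (F _ + F _); exact/val_inj. Qed.

Lemma ord2 (i : 'I_2) : i = 0 \/ i = 1.
Proof. by case: i => [[|[|//]]] ?; [left|right]; apply/val_inj. Qed.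

Lemma delta_psd {C : numClosedFieldType} :
  block_psd (fun i j : 'I_2 => (delta_mx i j : 'M[C]_2)).
Proof.
split.
  by move=> i j; apply/matrixP => k l; rewrite /dagger !mxE rmorph_nat andbC.
move=> v; rewrite !sum2 !mxE !sum2 !mxE !sum2 !mxE /=.
apply: le_trans (mul_conjC_ge0 (v 0 0 0 + v 1 1 0)) _; rewrite le_eqVlt; apply/orP; left; apply/eqP; rewrite rmorphD; ring.
Qed.

Section Lin.
Variable C : numClosedFieldType.
Variable E : 'M[C]_2 -> 'M[C]_2.
Hypothesis HE : linear_map E.

Lemma lin0 : E 0 = 0.
Proof. have := HE 1 0 0; rewrite !scale1r addr0 => /(congr1 (fun x => x - E 0)). by rewrite addrK subrr => <-. Qed.
Lemma linZ a X : E (a *: X) = a *: E X.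
Proof. by have := HE a X 0; rewrite !addr0 lin0 addr0. Qed.
Lemma linD X Y : E (X + Y) = E X + E Y.
Proof. by have := HE 1 X Y; rewrite !scale1r. Qed.
Lemma linN X : E (- X) = - E X.
Proof. by rewrite -scaleN1r linZ scaleN1r. Qed.
End Lin.
Arguments lin0 {C E}.
Arguments linZ {C E}.
Arguments linD {C E}.
Arguments linN {C E}.

Lemma cov_delta {C : numClosedFieldType} (E : 'M[C]_2 -> 'M[C]_2) :
  linear_map E -> Z2_invariant E ->
  [/\ E (delta_mx 0 0) 0 1 = 0, E (delta_mx 0 0) 1 0 = 0,
      E (delta_mx 1 1) 0 1 = 0, E (delta_mx 1 1) 1 0 = 0 &
      E (delta_mx 0 1) 0 0 = 0 /\ E (delta_mx 0 1) 1 1 = 0].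
Proof.
move=> Hl Hz.
have P0 : parity C *m delta_mx 0 0 *m parity C = delta_mx 0 0.
  apply/matrixP => i j; rewrite !mxE !sum2 !mxE !sum2 !mxE.
  by case: (ord2 i) => ->; case: (ord2 j) => -> /=; ring.
have P1 : parity C *m delta_mx 1 1 *m parity C = delta_mx 1 1.
  apply/matrixP => i j; rewrite !mxE !sum2 !mxE !sum2 !mxE.
  by case: (ord2 i) => ->; case: (ord2 j) => -> /=; ring.
have P01 : parity C *m delta_mx 0 1 *m parity C = - delta_mx 0 1.
  apply/matrixP => i j; rewrite !mxE !sum2 !mxE !sum2 !mxE.
  by case: (ord2 i) => ->; case: (ord2 j) => -> /=; ring.
have ent : forall M : 'M[C]_2, (parity C *m M *m parity C) =
   \matrix_(i, j) (if i == j then M i j else - M i j).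
  move=> M; apply/matrixP => i j; rewrite !mxE !sum2 !mxE !sum2 !mxE.
  case: (ord2 i) => ->; case: (ord2 j) => -> /=; ring.
have Z : forall x : C, x = - x -> x = 0.
  by move=> x /esym/eqP; rewrite eqNr => /eqP.
have := Hz (delta_mx 0 0); rewrite P0 ent => /matrixP H0.
have := Hz (delta_mx 1 1); rewrite P1 ent => /matrixP H1.
have := Hz (delta_mx 0 1); rewrite P01 (linN Hl) ent => /matrixP H01.
split; [apply: Z..|split; apply: Z].
- by have := H0 0 1; rewrite mxE.
- by have := H0 1 0; rewrite mxE.
- by have := H1 0 1; rewrite mxE.
- by have := H1 1 0; rewrite mxE.
- by have := H01 0 0; rewrite !mxE /= => /eqP; rewrite eqr_oppLR => /eqP.
- by have := H01 1 1; rewrite !mxE /= => /eqP; rewrite eqr_oppLR => /eqP.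
Qed.

Lemma proj_entry {C : numClosedFieldType} (psi : 'cV[C]_2) i j :
  proj psi i j = psi i 0 * (psi j 0)^*.
Proof. by rewrite /proj !mxE big_ord1 /dagger !mxE. Qed.

Lemma cN {C : numClosedFieldType} (x : C) : (- x)^* = - x^*.
Proof. exact: rmorphN. Qed.
Lemma cD {C : numClosedFieldType} (x y : C) : (x + y)^* = x^* + y^*.
Proof. exact: rmorphD. Qed.
Lemma cM {C : numClosedFieldType} (x y : C) : (x * y)^* = x^* * y^*.
Proof. exact: rmorphM. Qed.
Lemma c0 {C : numClosedFieldType} : (0 : C)^* = 0.
Proof. exact: rmorph0. Qed.

Lemma alg_id {C : numClosedFieldType} (k g a b t0 t1 s0 s1 : C) :
  t0 + t1 = 1 -> s0 + s1 = 1 -> k = g * a + g^* * b^* ->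
  (k^* * t0 + (- k^*)^* * 0) * k +
  (k^* * 0 + (- k^*)^* * t1) * - k^* +
  ((k^* * 0 + (- k^*)^* * b) * g +
   (k^* * a + (- k^*)^* * 0) * - g) +
  ((g^* * 0^* + (- g)^* * (a)^*) * k +
   (g^* * (b)^* + (- g)^* * 0^*) * - k^* +
   ((g^* * s0 + (- g)^* * 0) * g +
    (g^* * 0 + (- g)^* * s1) * - g)) = g * g^* - k * k^*.
Proof.
move=> ht hs ->.
have -> : t1 = 1 - t0 by rewrite -ht addrC addKr.
have -> : s1 = 1 - s0 by rewrite -hs addrC addKr.
rewrite !cN !cD !cM !conjCK c0; ring.
Qed.

Lemma nec_key {C : numClosedFieldType} (E : 'M[C]_2 -> 'M[C]_2) (psi phi : 'cV[C]_2) :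
  deterministic_Z2_operation E -> E (proj psi) = proj phi ->
  `|phi 0 0| ^+ 2 * `|phi 1 0| ^+ 2 <= `|psi 0 0| ^+ 2 * `|psi 1 0| ^+ 2.
Proof.
move=> [[Hl Hcp Htn Hz] Htp] HE.
set Y := fun i j : 'I_2 => E (delta_mx i j).
have [Hh Hp] : block_psd Y by apply: Hcp; apply: delta_psd.
have [z1 z2 z3 z4 [z5 z6]] := cov_delta _ Hl Hz.
have tr0 : Y 0 0 0 0 + Y 0 0 1 1 = 1.
  have := Htp (delta_mx 0 0); by rewrite /mxtrace !sum2 !mxE /= addr0.
have tr1 : Y 1 1 0 0 + Y 1 1 1 1 = 1.
  by have := Htp (delta_mx 1 1); rewrite /mxtrace !sum2 !mxE /= add0r.
have dec : E (proj psi) = \sum_(i < 2) \sum_(j < 2) proj psi i j *: Y i j.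
  rewrite {1}(matrix_sum_delta (proj psi)).
  rewrite (big_morph E (linD Hl) (lin0 Hl)); apply: eq_bigr => i _.
  rewrite (big_morph E (linD Hl) (lin0 Hl)); apply: eq_bigr => j _.
  by rewrite (linZ Hl).
have Hk : phi 0 0 * (phi 1 0)^* = psi 0 0 * (psi 1 0)^* * Y 0 1 0 1
    + psi 1 0 * (psi 0 0)^* * Y 1 0 0 1.
  have := dec; rewrite HE => /matrixP/(_ 0 1); rewrite proj_entry => ->.
  rewrite !sum2 !mxE !big_ord1 /dagger !mxE.
  rewrite z1 z3; ring.
set g := psi 0 0 * (psi 1 0)^*.
set k := phi 0 0 * (phi 1 0)^*.
have := Hp (fun i : 'I_2 => if i == 0 then \col_(l < 2) (if l == 0 then k else - k^*)
                     else \col_(l < 2) (if l == 0 then g else - g)).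
rewrite !sum2 /dagger !mxE !sum2 !mxE !sum2 !mxE /=.
rewrite (Hh 0 1) in Hk *. rewrite /dagger !mxE /= in Hk *.
rewrite /Y z1 z2 z3 z4 z5 z6 in Hk *.
have gc : psi 1 0 * (psi 0 0)^* = g^* by rewrite /g cM conjCK mulrC.
rewrite gc -/k -/g in Hk. rewrite /Y in tr0 tr1.
rewrite (alg_id _ _ _ _ _ _ _ _ tr0 tr1 Hk) subr_ge0.
have e1 : `|phi 0 0| ^+ 2 * `|phi 1 0| ^+ 2 = k * k^*.
  by rewrite !normCK /k cM conjCK; ring.
have e2 : `|psi 0 0| ^+ 2 * `|psi 1 0| ^+ 2 = g * g^*.
  by rewrite !normCK /g cM conjCK; ring.
by rewrite e1 e2.
Qed.


Lemma min_aux {C : numClosedFieldType} (x y u v : C) :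
  0 <= x -> 0 <= u -> x <= y -> u <= v -> x + y = u + v -> u * v <= x * y -> u <= x.
Proof.
move=> x0 u0 xy uv s h.
have [//|xu] := real_leP (ger0_real u0) (ger0_real x0).
have : x * y < u * v.
  have -> : u * v = x * y + (u - x) * (v - x).
    have -> : y = u + v - x by rewrite -s addrC addKr.
    ring.
  rewrite ltrDl mulr_gt0 // subr_gt0 //; exact: lt_le_trans uv.
by move/lt_geF; rewrite h.
Qed.

Lemma min_lem {C : numClosedFieldType} (x y u v : C) :
  0 <= x -> 0 <= y -> 0 <= u -> 0 <= v -> x + y = u + v -> u * v <= x * y ->
  Num.min u v <= Num.min x y.
Proof.
move=> x0 y0 u0 v0 s h.
have [xy|yx] := real_leP (ger0_real x0) (ger0_real y0);
have [uv|vu] := real_leP (ger0_real u0) (ger0_real v0).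
- exact: (@min_aux _ x y u v).
- apply: (@min_aux _ x y v u) => //; try exact: ltW; [by rewrite s addrC| by rewrite mulrC].
- apply: (@min_aux _ y x u v) => //; try exact: ltW; [by rewrite addrC| by rewrite [y * x]mulrC].
- apply: (@min_aux _ y x v u) => //; try exact: ltW; [by rewrite addrC s addrC| by rewrite mulrC [y * x]mulrC].
Qed.

Lemma min_le {C : numClosedFieldType} (x y : C) : x \is Num.real -> y \is Num.real ->
  Num.min x y <= x /\ Num.min x y <= y.
Proof. by move=> xr yr; have [h|h] := real_leP xr yr; split => //; exact: ltW. Qed.

Lemma min_gt0 {C : numClosedFieldType} (x y : C) : 0 < x -> 0 < y -> 0 < Num.min x y.
Proof.
move=> x0 y0; have [h|h] := real_leP (gtr0_real x0) (gtr0_real y0) => //.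
Qed.

Arguments min_le {C x y}.
Arguments min_gt0 {C x y}.

Lemma t_lemma {C : numClosedFieldType} (P S Q R : C) :
  0 <= P -> 0 <= S -> 0 < Q -> 0 < R -> P + S = 1 -> Q + R = 1 ->
  Num.min Q R <= Num.min P S ->
  [/\ 0 < P, 0 < S, 0 <= (P - R) / (Q - R), (P - R) / (Q - R) <= 1 &
      (P - R) / (Q - R) * Q + (1 - (P - R) / (Q - R)) * R = P].
Proof.
move=> P0 S0 Q0 R0 hPS hQR hm.
have [mP mS] := min_le (ger0_real P0) (ger0_real S0).
have mQR := min_gt0 Q0 R0.
have hmP := le_trans hm mP; have hmS := le_trans hm mS.
have Pp : 0 < P := lt_le_trans mQR hmP.
have Sp : 0 < S := lt_le_trans mQR hmS.
have hS : S = 1 - P by rewrite -hPS addrC addKr.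
have hR : R = 1 - Q by rewrite -hQR addrC addKr.
move: hmP hmS.
have [QR|RQ|QR] := real_ltgtP (gtr0_real Q0) (gtr0_real R0) => hmP hmS.
- have D : 0 < R - Q by rewrite subr_gt0.
  have -> : (P - R) / (Q - R) = (R - P) / (R - Q).
    by rewrite -(opprB R P) -(opprB R Q) invrN mulrNN.
  split => //.
  + apply: divr_ge0; last exact: ltW.
    by rewrite subr_ge0 hR -(lerD2r Q) subrK -hPS lerD2l.
  + by rewrite ler_pdivrMr // mul1r lerD2l lerN2.
  + field; by rewrite subr_eq0 eq_sym (lt_eqF QR).
- have D : 0 < Q - R by rewrite subr_gt0.
  split => //.
  + by apply: divr_ge0; [rewrite subr_ge0 | exact: ltW].
  + rewrite ler_pdivrMr // mul1r lerD2r.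
    by rewrite -(lerD2r S) hPS -hQR lerD2l.
  + field; by rewrite subr_eq0 (gt_eqF RQ).
- rewrite -QR subrr invr0 mulr0 subr0 mul1r mul0r add0r.
  split => //.
  apply/eqP; rewrite eq_le hmP /=.
  by rewrite -(lerD2r S) hPS -hQR -QR lerD2l.
Qed.


Ltac e2 := apply/matrixP; let i := fresh "i" in let j := fresh "j" in move=> i j;
  rewrite ?mxE ?sum2 ?mxE ?sum2 ?mxE ?sum2 ?mxE;
  case: (ord2 i) => ->; case: (ord2 j) => -> /=; rewrite ?big_ord1 ?mxE.

Ltac e2c := apply/matrixP; let i := fresh "i" in let j := fresh "j" in move=> i j;
  rewrite (ord1 j) ?mxE ?sum2 ?mxE;
  case: (ord2 i) => -> /=; rewrite ?big_ord1 ?mxE.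

Lemma tr_proj {C : numClosedFieldType} (v : 'cV[C]_2) : unit_vector v -> \tr (proj v) = 1.
Proof.
rewrite /unit_vector /mxtrace !sum2 !proj_entry !normCK => <-.
by [].
Qed.

Definition Kc {C : numClosedFieldType} (phi : 'cV[C]_2) (k : 'I_2) : 'M[C]_2 :=
  \matrix_(i, j) (if j == k then phi i 0 else 0).

Lemma kc_eq {C : numClosedFieldType} (phi : 'cV[C]_2) X :
  kraus (Kc phi 0) (Kc phi 1) X = \tr X *: proj phi.
Proof.
rewrite /kraus /Kc /dagger /mxtrace; e2; rewrite ?c0; ring.
Qed.

Lemma tp_le {C : numClosedFieldType} (E : 'M[C]_2 -> 'M[C]_2) :
  trace_preserving E -> trace_nonincreasing E.
Proof. by move=> H rho _; rewrite H. Qed.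

Lemma const_ok {C : numClosedFieldType} (psi phi : 'cV[C]_2) :
  unit_vector psi -> unit_vector phi -> phi 0 0 = 0 \/ phi 1 0 = 0 ->
  deterministic_Z2_operation (kraus (Kc phi 0) (Kc phi 1)) /\
  kraus (Kc phi 0) (Kc phi 1) (proj psi) = proj phi.
Proof.
move=> upsi uphi hphi.
have tp : trace_preserving (kraus (Kc phi 0) (Kc phi 1)).
  by move=> X; rewrite kc_eq mxtraceZ tr_proj // mulr1.
split; last by rewrite kc_eq tr_proj // scale1r.
split=> //; split; [exact: kraus_linear|exact: kraus_cp|exact: tp_le|].
move=> X; rewrite !kc_eq.
have -> : \tr (parity C *m X *m parity C) = \tr X.
  by rewrite mxtrace_mulC mulmxA parity2 mul1mx.
rewrite -scalemxAr -scalemxAl; congr (_ *: _).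
case: hphi => h; rewrite /proj /dagger; e2; rewrite ?h; ring.
Qed.

Definition diag2 {C : numClosedFieldType} (x y : C) : 'M[C]_2 :=
  \matrix_(i, j) (if i == j then (if i == 0 then x else y) else 0).
Definition adiag2 {C : numClosedFieldType} (x y : C) : 'M[C]_2 :=
  \matrix_(i, j) (if i == j then 0 else (if i == 0 then x else y)).

Lemma kraus_pure {C : numClosedFieldType} (K : 'M[C]_2) (psi phi : 'cV[C]_2) mu :
  K *m psi = mu *: phi -> K *m proj psi *m dagger K = (mu * mu^*) *: proj phi.
Proof.
move=> h; rewrite /proj mulmxA -mulmxA -daggerM h daggerZ -scalemxAl -scalemxAr scalerA.
by rewrite mulrC.
Qed.

Lemma gen_ok {C : numClosedFieldType} (psi phi : 'cV[C]_2) (m1 m2 x y u w : C) :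
  x * psi 0 0 = m1 * phi 0 0 -> y * psi 1 0 = m1 * phi 1 0 ->
  u * psi 1 0 = m2 * phi 0 0 -> w * psi 0 0 = m2 * phi 1 0 ->
  m1 * m1^* + m2 * m2^* = 1 ->
  x^* * x + w^* * w = 1 -> y^* * y + u^* * u = 1 ->
  deterministic_Z2_operation (kraus (diag2 x y) (adiag2 u w)) /\
  kraus (diag2 x y) (adiag2 u w) (proj psi) = proj phi.
Proof.
move=> h1 h2 h3 h4 hm hx hy.
split; last first.
  rewrite /kraus (@kraus_pure _ _ _ phi m1) ?(@kraus_pure _ _ _ phi m2) -?scalerDl ?hm ?scale1r //.
  - by rewrite /adiag2; e2c; rewrite ?h3 ?h4; ring.
  - by rewrite /diag2; e2c; rewrite ?h1 ?h2; ring.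
have tp : trace_preserving (kraus (diag2 x y) (adiag2 u w)).
  apply: kraus_tp; rewrite /dagger /diag2 /adiag2; e2; rewrite ?c0.
  all: try by ring.
  by rewrite -hx; ring.
  by rewrite -hy; ring.
split=> //; split; [exact: kraus_linear|exact: kraus_cp|exact: tp_le|].
apply: (@kraus_z2 _ _ _ false true).
  by rewrite /diag2 /parity; e2; ring.
by rewrite /adiag2 /parity; e2; ring.
Qed.

Lemma nsq {C : numClosedFieldType} (z : C) : z^* * z = `|z| ^+ 2.
Proof. by rewrite normCK mulrC. Qed.

Lemma nsq3 {C : numClosedFieldType} (m c a : C) :
  `|m * c / a| ^+ 2 = `|m| ^+ 2 * `|c| ^+ 2 / `|a| ^+ 2.
Proof. by rewrite !normrM normfV !exprMn exprVn. Qed.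

Lemma sqrt_sq {C : numClosedFieldType} (t : C) : 0 <= t -> `|sqrtC t| ^+ 2 = t.
Proof. by move=> t0; rewrite ger0_norm ?sqrtC_ge0 // sqrtCK. Qed.

Lemma sqrt_cc {C : numClosedFieldType} (t : C) : 0 <= t -> sqrtC t * (sqrtC t)^* = t.
Proof. by move=> t0; rewrite -normCK sqrt_sq. Qed.

Lemma sufficiency {C : numClosedFieldType} (psi phi : 'cV[C]_2) :
  unit_vector psi -> unit_vector phi -> coh phi <= coh psi ->
  exists E : 'M[C]_2 -> 'M[C]_2,
      deterministic_Z2_operation E /\ E (proj psi) = proj phi.
Proof.
move=> upsi uphi hc.
have [hz|hnz] := boolP ((phi 0 0 == 0) || (phi 1 0 == 0)).
  exists (kraus (Kc phi 0) (Kc phi 1)); apply: const_ok => //.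
  by case/orP: hz => /eqP; [left|right].
move: hnz; rewrite negb_or => /andP[c0' d0'].
have hPS : `|psi 0 0| ^+ 2 + `|psi 1 0| ^+ 2 = 1 by rewrite -upsi sum2.
have hQR : `|phi 0 0| ^+ 2 + `|phi 1 0| ^+ 2 = 1 by rewrite -uphi sum2.
move: hc; rewrite /coh /pop ler_pM2l // => hm.
have Qp : 0 < `|phi 0 0| ^+ 2 by rewrite exprn_gt0 // normr_gt0.
have Rp : 0 < `|phi 1 0| ^+ 2 by rewrite exprn_gt0 // normr_gt0.
have [Pp Sp t0 t1 teq] := t_lemma _ _ _ _ (exprn_ge0 2 (normr_ge0 (psi 0 0))) (exprn_ge0 2 (normr_ge0 (psi 1 0)))
  Qp Rp hPS hQR hm.
move: t0 t1 teq; set t := _ / _ => t0 t1 teq.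
have a0 : psi 0 0 != 0 by apply/eqP => h0; move: Pp; rewrite h0 normr0 expr0n /= ltxx.
have b0 : psi 1 0 != 0 by apply/eqP => h0; move: Sp; rewrite h0 normr0 expr0n /= ltxx.
have t0' : 0 <= 1 - t by rewrite subr_ge0.
set m1 := sqrtC t; set m2 := sqrtC (1 - t).
exists (kraus (diag2 (m1 * phi 0 0 / psi 0 0) (m1 * phi 1 0 / psi 1 0))
               (adiag2 (m2 * phi 0 0 / psi 1 0) (m2 * phi 1 0 / psi 0 0))).
apply: gen_ok.
- by rewrite divfK.
- by rewrite divfK.
- by rewrite divfK.
- by rewrite divfK.
- by rewrite !sqrt_cc // addrC subrK.
- rewrite !nsq !nsq3 !sqrt_sq //.
  have -> : forall P Q R : C, t * Q / P + (1 - t) * R / P = (t * Q + (1 - t) * R) / P.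
    by move=> P Q R; rewrite -mulrDl.
  by rewrite teq divff // gt_eqF.
- rewrite !nsq !nsq3 !sqrt_sq //.
  have -> : forall P Q R : C, t * Q / P + (1 - t) * R / P = (t * Q + (1 - t) * R) / P.
    by move=> P Q R; rewrite -mulrDl.
  have -> : t * `|phi 1 0| ^+ 2 + (1 - t) * `|phi 0 0| ^+ 2 = `|psi 1 0| ^+ 2.
    have e : `|psi 1 0| ^+ 2 = 1 - `|psi 0 0| ^+ 2 by rewrite -hPS addrC addKr.
    rewrite e -teq (_ : `|phi 1 0| ^+ 2 = 1 - `|phi 0 0| ^+ 2); first ring.
    by rewrite -hQR addrC addKr.
  by rewrite divff // gt_eqF.
Qed.


Theorem theorem10 (C : numClosedFieldType) (psi phi : 'cV[C]_2) :
  unit_vector psi -> unit_vector phi ->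
  (exists E : 'M[C]_2 -> 'M[C]_2,
      deterministic_Z2_operation E /\ E (proj psi) = proj phi)
  <-> coh phi <= coh psi.
Proof.
move=> upsi uphi; split; last exact: sufficiency.
case=> E [hE hp].
have key := nec_key _ _ _ hE hp.
rewrite /coh /pop ler_pM2l //; apply: min_lem => //.
- exact: exprn_ge0.
- exact: exprn_ge0.
- exact: exprn_ge0.
- exact: exprn_ge0.
move: upsi uphi; rewrite /unit_vector !sum2 => -> ->. by [].
Qed.
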